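(* Let $N>0$, $\gamma>0$, $\mathcal{R}_0>0$, and let $(S,I,R):[0,\infty)\to\mathbb{R}^3$ be the solution of $$S'=-\frac{\gamma\mathcal{R}_0 SI}{N},\qquad I'=\frac{\gamma\mathcal{R}_0 SI}{N}-\gamma I,\qquad R'=\gamma I,$$ with initial data $S(0)>0$, $I(0)>0$, $R(0)\ge 0$, $S(0)+I(0)+R(0)=N$. Let $I_{\max}=\sup_{t\ge0}I(t)$, and let $M$ be a real number with $I(0)<M<S(0)+I(0)$. Suppose $\mathcal{R}_0\ge \frac{N}{S(0)}$. Then $I_{\max}\le M$ if and only if $$\mathcal{R}_0\le N\,\frac{W_{-1}\!\left(\frac{M-N+R(0)}{S(0)\,e}\right)}{M-N+R(0)}.$$
   Context: SIR epidemic model written with basic reproduction number $\mathcal{R}_0=\beta N/\gamma$; along solutions $S+I+R\equiv N$. $I_{\max}$ denotes the maximum (supremum) of $I(t)$ over $t\ge0$. $W_{-1}$ is the lower real branch of the Lambert $W$ function: for $x\in[-1/e,0)$, $W_{-1}(x)$ is the unique real $y\le -1$ with $ye^y=x$. (Under the hypotheses, $M-N+R(0)<0$ and the argument of $W_{-1}$ lies in $(-1/e,0)$.) *)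

(* Defs.v *)
From Stdlib Require Import Reals Lra ClassicalEpsilon.
From Coquelicot Require Import Coquelicot.
Open Scope R_scope.

(* Lower real branch W_{-1} of Lambert W: for x in [-1/e,0), the unique real
   y <= -1 with y e^y = x.  Defined by (classical) choice; outside [-1/e,0)
   its value is unspecified (irrelevant here). *)
Definition LambertWm1 (x : R) : R :=
  epsilon (inhabits 0) (fun y => y <= -1 /\ y * exp y = x).

(* (S,I,R) : [0,oo) -> R^3 is a solution of the SIR system with parameters
   N, gamma, R0: differentiable on (0,oo) with the given derivatives and
   right-continuous at 0 (i.e. a classical solution on [0,oo)). *)
Definition SIR_solution (N gamma R0 : R) (S I Rc : R -> R) : Prop :=
  (forall t, 0 < t ->
      is_derive S t (- (gamma * R0 * S t * I t / N)) /\
      is_derive I t (gamma * R0 * S t * I t / N - gamma * I t) /\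
      is_derive Rc t (gamma * I t)) /\
  filterlim S (at_right 0) (locally (S 0)) /\
  filterlim I (at_right 0) (locally (I 0)) /\
  filterlim Rc (at_right 0) (locally (Rc 0)).

Definition Imax (I : R -> R) : Rbar :=
  Lub_Rbar (fun x => exists t, 0 <= t /\ x = I t).

(* Main.v *)
Require Import Defs.
From Stdlib Require Import Reals Lra Classical ClassicalEpsilon.
From Coquelicot Require Import Coquelicot.
Open Scope R_scope.

Definition RC (f : R -> R) := filterlim f (at_right 0) (locally (f 0)).

Lemma RC_eps f : RC f -> forall e, 0 < e -> exists d, 0 < d /\ forall x, 0 < x < d -> Rabs (f x - f 0) < e.
Proof.
  intros H e He. destruct (proj1 (filterlim_locally f (f 0)) H (mkposreal e He)) as [d Hd].
  exists d. split. apply cond_pos. intros x Hx. apply (Hd x). 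
  change (Rabs (x - 0) < d). rewrite Rminus_0_r, Rabs_pos_eq; lra. lra.
Qed.

Lemma cont_eps f t : continuous f t -> forall e, 0 < e -> exists d, 0 < d /\ forall x, Rabs (x - t) < d -> Rabs (f x - f t) < e.
Proof.
  intros H e He. destruct (proj1 (filterlim_locally f (f t)) H (mkposreal e He)) as [d Hd].
  exists d. split. apply cond_pos. intros x Hx. apply (Hd x). exact Hx.
Qed.

Lemma RC_plus f g : RC f -> RC g -> RC (fun t => f t + g t).
Proof. intros Hf Hg. unfold RC. eapply filterlim_comp_2; [exact Hf|exact Hg|]. apply (filterlim_plus (f 0) (g 0)). Qed.
Lemma RC_mult f g : RC f -> RC g -> RC (fun t => f t * g t).
Proof. intros Hf Hg. unfold RC. eapply filterlim_comp_2; [exact Hf|exact Hg|]. apply (filterlim_mult (f 0) (g 0)). Qed.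
Lemma RC_comp f g : RC f -> continuous g (f 0) -> RC (fun t => g (f t)).
Proof. intros Hf Hg. unfold RC. eapply filterlim_comp; [exact Hf|exact Hg]. Qed.
Lemma RC_cont g : continuous g 0 -> RC g.
Proof. intros H. unfold RC. eapply filterlim_filter_le_1; [|exact H].
  intros P [d Hd]. exists d. intros; apply Hd; auto. Qed.

Lemma incr_pos (f df : R -> R) a b : a <= b ->
  (forall t, a <= t <= b -> is_derive f t (df t) /\ 0 <= df t) -> f a <= f b.
Proof.
  intros Hab H.
  destruct (MVT_gen f a b df) as [c [Hc Heq]].
  - intros x Hx. rewrite Rmin_left, Rmax_right in Hx by lra. apply H; lra.
  - intros x Hx. rewrite Rmin_left, Rmax_right in Hx by lra. apply continuity_pt_filterlim.
    apply (ex_derive_continuous f x). exists (df x). apply H; lra.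
  - rewrite Rmin_left, Rmax_right in Hc by lra. destruct (H c Hc) as [_ Hd].
    assert (0 <= df c * (b - a)) by (apply Rmult_le_pos; lra). lra.
Qed.

Lemma incr0 (f df : R -> R) T : RC f ->
  (forall t, 0 < t < T -> is_derive f t (df t) /\ 0 <= df t) ->
  forall b, 0 <= b < T -> f 0 <= f b.
Proof.
  intros Hf H b Hb. destruct (Req_dec b 0) as [->|Hb0]; [lra|].
  apply Rnot_lt_le. intro Hlt.
  destruct (RC_eps f Hf (f 0 - f b)) as [d [Hd Hx]]; [lra|].
  set (x := Rmin (d/2) b).
  assert (Hx0 : 0 < x) by (unfold x; apply Rmin_glb_lt; lra).
  assert (Hxb : x <= b) by apply Rmin_r.
  assert (Hxd : x < d) by (unfold x; eapply Rle_lt_trans; [apply Rmin_l|lra]).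
  assert (f x <= f b) by (apply (incr_pos f df); [lra| intros; apply H; lra]).
  specialize (Hx x (conj Hx0 Hxd)). apply Rabs_def2 in Hx. lra.
Qed.

Lemma left_lim f t m : 0 < t -> ex_derive f t -> (forall s, 0 < s < t -> m <= f s) -> m <= f t.
Proof.
  intros Ht Hd H. apply Rnot_lt_le. intro Hlt.
  destruct (cont_eps f t (ex_derive_continuous f t Hd) (m - f t)) as [d [Hd0 Hx]]; [lra|].
  set (x := Rmax (t - d/2) (t/2)).
  assert (t - d/2 <= x) by apply Rmax_l. assert (t/2 <= x) by apply Rmax_r.
  assert (x < t) by (unfold x; apply Rmax_lub_lt; lra).
  specialize (H x ltac:(lra)). assert (Rabs (x - t) < d) by (apply Rabs_def1; lra).
  specialize (Hx x H3). apply Rabs_def2 in Hx. lra.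
Qed.

Lemma cont_ind (P : R -> Prop) :
 (forall t, 0 <= t -> (forall s, 0 <= s < t -> P s) -> P t) ->
 (forall t, 0 <= t -> (forall s, 0 <= s <= t -> P s) ->
    exists d, 0 < d /\ forall s, t < s < t + d -> P s) ->
 forall t, 0 <= t -> P t.
Proof.
  intros H1 H2 t1 Ht1. apply NNPP. intro Hn.
  set (E := fun T => 0 <= T /\ forall s, 0 <= s <= T -> P s).
  assert (HE0 : E 0).
  { split; [lra|]. intros s Hs. replace s with 0 by lra. apply H1; [lra|]. intros; lra. }
  assert (Hb : forall T, E T -> T <= t1).
  { intros T [HT HP]. apply Rnot_lt_le. intro. apply Hn, HP. lra. }
  destruct (completeness E) as [m [Hub Hlub]].
  { exists t1. intros T HT. now apply Hb. }
  { exists 0. exact HE0. }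
  assert (Hm0 : 0 <= m) by (apply Hub; exact HE0).
  assert (Hlt : forall s, 0 <= s < m -> P s).
  { intros s Hs. apply NNPP. intro HPs.
    assert (m <= s); [|lra]. apply Hlub. intros T HT. apply Rnot_lt_le. intro HsT.
    apply HPs. apply (proj2 HT). lra. }
  assert (Hm : P m) by (apply H1; auto).
  assert (Hle : forall s, 0 <= s <= m -> P s).
  { intros s Hs. destruct (Req_dec s m) as [->|]; auto. apply Hlt; lra. }
  destruct (H2 m Hm0 Hle) as [d [Hd HP]].
  assert (E (m + d/2)).
  { split; [lra|]. intros s Hs. destruct (Rle_lt_dec s m). apply Hle; lra. apply HP; lra. }
  assert (m + d/2 <= m) by (apply Hub; auto). lra.
Qed.

Lemma phi_decr a b : a < b -> b <= -1 -> b * exp b < a * exp a.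
Proof.
  intros Hab Hb. set (d := b - a).
  assert (Hd : 1 + d < exp d) by (apply exp_ineq1; unfold d; lra).
  assert (Hea : exp b = exp a * exp d) by (rewrite <- exp_plus; f_equal; unfold d; ring).
  rewrite Hea. assert (0 < exp a) by apply exp_pos.
  assert (Hdp : 0 < d) by (unfold d; lra).
  assert ((b + 1) * (exp d - 1) <= 0) by (apply Rmult_le_0_r; lra).
  assert (b * exp d < a) by (unfold d in *; nra).
  replace (b * (exp a * exp d)) with ((b * exp d) * exp a) by ring.
  apply Rmult_lt_compat_r; auto.
Qed.

Lemma W_exists x : - / exp 1 < x < 0 -> exists y, y <= -1 /\ y * exp y = x.
Proof.
  intros [H1 H2].
  set (K := 4 / (- x) + 1).
  assert (HK4 : 4 / (-x) > 0) by (apply Rdiv_lt_0_compat; lra).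
  assert (HK : K > 1) by (unfold K; lra).
  assert (HxK : - x * K > 4).
  { unfold K. replace (- x * (4 / - x + 1)) with (4 + - x) by (field; lra). lra. }
  assert (He2 : 1 + K/2 < exp (K/2)) by (apply exp_ineq1; lra).
  assert (HeK : exp K = exp (K/2) * exp (K/2)) by (rewrite <- exp_plus; f_equal; field).
  assert (HeK2 : K * K / 4 < exp K) by (rewrite HeK; nra).
  assert (Hphi : x < - K * exp (- K)).
  { idtac. assert (0 < exp K) by apply exp_pos. assert (Hk: exp (-K) = / exp K) by apply exp_Ropp. rewrite Hk.
    apply (Rmult_lt_reg_r (exp K)); auto. field_simplify; [|lra].
    nra. }
  assert (He1 : 0 < exp 1) by apply exp_pos.
  assert (Hm1 : -1 * exp (-1) = - / exp 1) by (rewrite <- (exp_Ropp 1); replace (- (1)) with (-1) by ring; ring).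
  destruct (Ranalysis5.IVT_interv (fun y => x - y * exp y) (-K) (-1)) as [y [Hy Hy0]].
  - intros a _. apply continuity_pt_filterlim.
    apply (ex_derive_continuous (fun y => x - y * exp y)). auto_derive. auto.
  - lra.
  - simpl. lra.
  - lra.
  - exists y. split; [lra|]. simpl in Hy0. lra.
Qed.

Lemma W_spec x : - / exp 1 < x < 0 -> LambertWm1 x <= -1 /\ LambertWm1 x * exp (LambertWm1 x) = x.
Proof.
  intros H. unfold LambertWm1. apply epsilon_spec. now apply W_exists.
Qed.

Lemma negdiv A p q : A < 0 -> (p <= q / A <-> q <= p * A).
Proof.
  intros HA. assert (Hq : q / A * A = q) by (field; lra). split; intro H.
  - rewrite <- Hq. nra.
  - assert (p * A * / A = p) by (field; lra). assert (/ A < 0) by (apply Rinv_lt_0_compat; lra).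
    unfold Rdiv. rewrite <- H0. nra.
Qed.

Lemma exp_le_iff a b : a <= b <-> exp a <= exp b.
Proof.
  split; intro H.
  - destruct (Req_dec a b) as [->|]; [lra|]. left; apply exp_increasing; lra.
  - apply Rnot_lt_le; intro. assert (exp b < exp a) by (apply exp_increasing; lra). lra.
Qed.

Lemma phi_iff W z : W <= -1 -> z <= -1 -> (W <= z <-> z * exp z <= W * exp W).
Proof.
  intros HW Hz. split; intro H.
  - destruct (Req_dec W z) as [->|]; [lra|]. left. apply phi_decr; lra.
  - apply Rnot_lt_le. intro. assert (W * exp W < z * exp z) by (apply phi_decr; lra). lra.
Qed.

Lemma alg (N R0 s0 i0 M r0 : R) : 0<N -> 0<R0 -> 0<s0 -> s0+i0+r0 = N -> i0 < M -> M < s0+i0 ->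
  N/R0 <= s0 ->
  (i0 + s0 - N/R0 - N/R0 * ln (s0/(N/R0)) <= M <->
   R0 <= N * LambertWm1 ((M - N + r0)/(s0*exp 1)) / (M - N + r0)).
Proof.
  intros HN HR0 Hs0 Hsum HM1 HM2 Hc.
  set (c := N/R0) in *. assert (Hcp : 0 < c) by (unfold c; apply Rdiv_lt_0_compat; lra).
  set (A := M - N + r0). assert (HA : A = M - s0 - i0) by (unfold A; lra).
  assert (HAn : A < 0) by lra. assert (HAs : - s0 < A) by lra.
  assert (He : 0 < exp 1) by apply exp_pos.
  set (x := A / (s0 * exp 1)).
  assert (Hx : - / exp 1 < x < 0).
  { unfold x. split.
    - replace (- / exp 1) with (- s0 / (s0 * exp 1)) by (field; lra).
      unfold Rdiv. apply Rmult_lt_compat_r. apply Rinv_0_lt_compat; nra. lra.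
    - unfold Rdiv. assert (0 < / (s0 * exp 1)) by (apply Rinv_0_lt_compat; nra). nra. }
  destruct (W_spec x Hx) as [HW HWe]. set (W := LambertWm1 x) in *.
  set (z := A / c).
  assert (HR : R0 <= N * W / A <-> W <= z).
  { rewrite negdiv by lra. unfold z, c. split; intro H.
    - replace (A / (N / R0)) with (R0 * A / N) by (field; lra).
      apply (Rmult_le_reg_l N); auto. replace (N * (R0 * A / N)) with (R0 * A) by (field; lra). lra.
    - replace (A / (N / R0)) with (R0 * A / N) in H by (field; lra).
      apply (Rmult_le_compat_l N) in H; [|lra]. replace (N * (R0 * A / N)) with (R0 * A) in H by (field; lra). lra. }
  rewrite HR.
  set (v := -1 - ln (s0 / c)).
  assert (HL : i0 + s0 - c - c * ln (s0 / c) <= M <-> v <= z).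
  { unfold v, z. split; intro H.
    - apply (Rmult_le_reg_l c); auto. replace (c * (A / c)) with A by (field; lra). nra.
    - apply (Rmult_le_compat_l c) in H; [|lra]. replace (c * (A / c)) with A in H by (field; lra). nra. }
  rewrite HL.
  assert (Hln : 0 <= ln (s0 / c)).
  { rewrite <- ln_1. apply ln_le; [lra|]. apply (Rmult_le_reg_l c); auto.
    replace (c * (s0 / c)) with s0 by (field; lra). lra. }
  destruct (Rle_lt_dec (-1) z) as [Hz|Hz].
  - split; intros; unfold v in *; lra.
  - set (q := c / (s0 * exp 1)).
    assert (Hq : exp v = q).
    { unfold v, q. unfold Rminus. rewrite exp_plus, exp_Ropp, exp_ln.
      replace (-1) with (- (1)) by ring. rewrite exp_Ropp. field. split; lra.
      apply Rdiv_lt_0_compat; lra. }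
    assert (Hxq : x = z * q) by (unfold x, z, q; field; lra).
    rewrite (phi_iff W z) by lra. rewrite HWe, Hxq, exp_le_iff, Hq.
    assert (0 < q) by (unfold q; apply Rdiv_lt_0_compat; nra).
    split; intro; nra.
Qed.

Lemma RC_const a : RC (fun _ => a).
Proof. unfold RC. apply filterlim_const. Qed.
Lemma RC_opp f : RC f -> RC (fun t => - f t).
Proof. intros Hf. unfold RC. eapply filterlim_comp; [exact Hf|]. apply (filterlim_opp (f 0)). Qed.
Lemma RC_scal a f : RC f -> RC (fun t => a * f t).
Proof. intros Hf. apply (RC_mult (fun _ => a) f); [apply RC_const|exact Hf]. Qed.

Lemma ln_le_sub1 u : 0 < u -> ln u <= u - 1.
Proof.
  intros Hu. apply exp_le_iff. rewrite exp_ln by auto.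
  destruct (Req_dec u 1) as [->|]. replace (1 - 1) with 0 by ring. rewrite exp_0; lra.
  left. replace u with (1 + (u - 1)) at 1 by ring. apply exp_ineq1. lra.
Qed.

Lemma deriv_V (N gamma R0 : R) (S I : R -> R) t c :
  is_derive S t (- (gamma * R0 * S t * I t / N)) ->
  is_derive I t (gamma * R0 * S t * I t / N - gamma * I t) ->
  0 < S t -> 0 < N -> 0 < R0 -> c = N / R0 ->
  is_derive (fun t => I t + S t - c * ln (S t)) t 0.
Proof.
  intros dS dI HS HN HR Hc.
  assert (H := is_derive_minus _ _ t _ _ (is_derive_plus _ _ t _ _ dI dS)
     (is_derive_scal _ t c _ (is_derive_comp ln S t _ _ (is_derive_ln _ HS) dS))).
  match type of H with is_derive _ _ ?l => replace 0 with l end. exact H.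
  unfold minus, plus, opp, scal; simpl. unfold mult; simpl. rewrite Hc. field. lra.
Qed.

Lemma ode (N gamma R0 : R) (S I Rc : R -> R) :
  0 < N -> 0 < gamma -> 0 < R0 -> SIR_solution N gamma R0 S I Rc -> 0 < S 0 -> 0 < I 0 ->
  N/R0 <= S 0 ->
  (forall t, 0 <= t -> I t <= I 0 + S 0 - N/R0 - N/R0 * ln (S 0/(N/R0))) /\
  (exists t, 0 <= t /\ I t = I 0 + S 0 - N/R0 - N/R0 * ln (S 0/(N/R0))).
Proof.
  intros HN Hg HR [Hder [HSc [HIc _]]] HS0 HI0 Hthr.
  set (c := N / R0) in *. assert (Hcp : 0 < c) by (unfold c; apply Rdiv_lt_0_compat; lra).
  assert (dS : forall t, 0 < t -> is_derive S t (- (gamma * R0 * S t * I t / N))) by (intros t Ht; apply (Hder t Ht)).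
  assert (dI : forall t, 0 < t -> is_derive I t (gamma * R0 * S t * I t / N - gamma * I t)) by (intros t Ht; apply (Hder t Ht)).
  assert (eS : forall t, 0 < t -> ex_derive S t) by (intros t Ht; eexists; apply dS; auto).
  assert (eI : forall t, 0 < t -> ex_derive I t) by (intros t Ht; eexists; apply dI; auto).
  set (V0 := I 0 + S 0 - c * ln (S 0)).
  assert (HV : forall T, (forall s, 0 <= s < T -> 0 < S s) -> forall b, 0 <= b < T ->
             I b + S b - c * ln (S b) = V0).
  { intros T HT b Hb.
    assert (RCV : RC (fun t => I t + S t - c * ln (S t))).
    { apply (RC_plus (fun t => I t + S t) (fun t => - (c * ln (S t)))).
      apply RC_plus; assumption. apply RC_opp, RC_scal.
      apply (RC_comp S ln HSc). apply continuous_ln; auto. }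
    assert (dV : forall t, 0 < t < T -> is_derive (fun t => I t + S t - c * ln (S t)) t 0).
    { intros t Ht. apply (deriv_V N gamma R0); [apply dS; lra|apply dI; lra|apply HT; lra|lra|lra|reflexivity]. }
    assert (h1 := incr0 _ (fun _ => 0) T RCV ltac:(intros t Ht; split; [apply dV; auto|lra]) b Hb).
    assert (h2 := incr0 (fun t => - (I t + S t - c * ln (S t))) (fun _ => 0) T (RC_opp _ RCV)
       ltac:(intros t Ht; split; [rewrite <- Ropp_0; apply (is_derive_opp (fun t => I t + S t - c * ln (S t))); apply dV; auto|lra]) b Hb).
    simpl in h1, h2. unfold V0. lra. }
  assert (Hpos : forall t, 0 <= t -> 0 < S t /\ 0 < I t).
  { apply cont_ind.
    - intros t Ht Hlt. destruct (Req_dec t 0) as [->|Ht0]; [auto|].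
      assert (Ht' : 0 < t) by lra. split.
      + apply Rlt_le_trans with (exp (- V0 / c)); [apply exp_pos|].
        apply left_lim; auto. intros s Hs.
        assert (HVs := HV t (fun s Hs => proj1 (Hlt s Hs)) s ltac:(lra)).
        destruct (Hlt s ltac:(lra)) as [HSs HIs].
        rewrite <- (exp_ln (S s)) by auto. apply (proj1 (exp_le_iff _ _)).
        apply (Rmult_le_reg_l c); auto. replace (c * (- V0 / c)) with (- V0) by (field; lra). lra.
      + apply Rlt_le_trans with (I 0 * exp (- gamma * t)); [apply Rmult_lt_0_compat; auto; apply exp_pos|].
        apply left_lim; auto. intros s Hs.
        assert (RCh : RC (fun u => I u * exp (gamma * u))).
        { apply (RC_mult I (fun u => exp (gamma * u))); auto. apply RC_cont.
          apply (ex_derive_continuous (fun u => exp (gamma * u))). auto_derive; auto. }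
        assert (Hdh : forall u, 0 < u < t -> is_derive (fun u => I u * exp (gamma * u)) u (exp (gamma * u) * (gamma * R0 * S u * I u / N)) /\ 0 <= exp (gamma * u) * (gamma * R0 * S u * I u / N)).
        { intros u Hu. destruct (Hlt u ltac:(lra)) as [HSu HIu]. split.
          -- assert (He : is_derive (fun u => exp (gamma * u)) u (gamma * exp (gamma * u))) by (auto_derive; auto; ring).
             assert (Hm := is_derive_mult _ _ u _ _ (dI u ltac:(lra)) He Rmult_comm).
             match type of Hm with is_derive _ _ ?l => replace (exp (gamma * u) * (gamma * R0 * S u * I u / N)) with l end.
             exact Hm. unfold plus, mult; simpl. field. lra.
          -- apply Rmult_le_pos. left; apply exp_pos. 
             apply Rmult_le_pos; [|left; apply Rinv_0_lt_compat; lra].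
             apply Rmult_le_pos; [|lra]. apply Rmult_le_pos; [|lra]. nra. }
        assert (hs := incr0 (fun u => I u * exp (gamma * u)) _ t RCh Hdh s ltac:(lra)).
        simpl in hs. rewrite Rmult_0_r, exp_0, Rmult_1_r in hs.
        assert (Hee : exp (gamma * s) * exp (- gamma * s) = 1) by (rewrite <- exp_plus; replace (gamma * s + - gamma * s) with 0 by ring; apply exp_0).
        assert (exp (- gamma * t) <= exp (- gamma * s)) by (apply (proj1 (exp_le_iff _ _)); nra).
        assert (0 < exp (- gamma * s)) by apply exp_pos. assert (0 < exp (- gamma * t)) by apply exp_pos.
        assert (Hk : I 0 * exp (- gamma * s) <= I s * exp (gamma * s) * exp (- gamma * s)) by (apply Rmult_le_compat_r; lra).
        rewrite Rmult_assoc, Hee, Rmult_1_r in Hk.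
        assert (I 0 * exp (- gamma * t) <= I 0 * exp (- gamma * s)) by (apply Rmult_le_compat_l; lra). lra.
    - intros t Ht Hle. destruct (Hle t (conj Ht (Rle_refl t))) as [HSt HIt].
      destruct (Req_dec t 0) as [->|Ht0].
      + destruct (RC_eps S HSc (S 0) HS0) as [d1 [Hd1 H1]].
        destruct (RC_eps I HIc (I 0) HI0) as [d2 [Hd2 H2]].
        exists (Rmin d1 d2). split; [apply Rmin_glb_lt; auto|]. intros s Hs.
        assert (s < d1) by (pose proof (Rmin_l d1 d2); lra).
        assert (s < d2) by (pose proof (Rmin_r d1 d2); lra).
        specialize (H1 s ltac:(lra)). specialize (H2 s ltac:(lra)).
        apply Rabs_def2 in H1. apply Rabs_def2 in H2. lra.
      + assert (Ht' : 0 < t) by lra.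
        destruct (cont_eps S t (ex_derive_continuous S t (eS t Ht')) (S t) HSt) as [d1 [Hd1 H1]].
        destruct (cont_eps I t (ex_derive_continuous I t (eI t Ht')) (I t) HIt) as [d2 [Hd2 H2]].
        exists (Rmin d1 d2). split; [apply Rmin_glb_lt; auto|]. intros s Hs.
        assert (s - t < d1) by (pose proof (Rmin_l d1 d2); lra).
        assert (s - t < d2) by (pose proof (Rmin_r d1 d2); lra).
        specialize (H1 s ltac:(apply Rabs_def1; lra)). specialize (H2 s ltac:(apply Rabs_def1; lra)).
        apply Rabs_def2 in H1. apply Rabs_def2 in H2. lra. }
  assert (HVall : forall t, 0 <= t -> I t + S t - c * ln (S t) = V0).
  { intros t Ht. apply (HV (t + 1)); [|lra]. intros s Hs. apply Hpos; lra. }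
  assert (Hdec : forall t, 0 <= t -> S t <= S 0).
  { intros t Ht.
    assert (h := incr0 (fun u => - S u) (fun u => gamma * R0 * S u * I u / N) (t + 1) (RC_opp S HSc)).
    assert (- S 0 <= - S t); [|lra]. apply h; [|lra].
    intros u Hu. destruct (Hpos u ltac:(lra)) as [HSu HIu]. split.
    - replace (gamma * R0 * S u * I u / N) with (opp (- (gamma * R0 * S u * I u / N))) by (unfold opp; simpl; ring).
      apply (is_derive_opp S). apply dS; lra.
    - apply Rmult_le_pos; [|left; apply Rinv_0_lt_compat; lra].
      apply Rmult_le_pos; [|lra]. apply Rmult_le_pos; [|lra]. nra. }
  assert (Hlnd : ln (S 0 / c) = ln (S 0) - ln c) by (apply ln_div; lra).
  rewrite Hlnd. split.
  - intros t Ht. destruct (Hpos t Ht) as [HSt HIt]. specialize (HVall t Ht). unfold V0 in HVall.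
    assert (Hl := ln_le_sub1 (S t / c) ltac:(apply Rdiv_lt_0_compat; lra)).
    rewrite ln_div in Hl by lra.
    assert (c * (ln (S t) - ln c) <= c * (S t / c - 1)) by (apply Rmult_le_compat_l; lra).
    replace (c * (S t / c - 1)) with (S t - c) in H by (field; lra). nra.
  - assert (Hex : exists t, 0 <= t /\ S t = c).
    { destruct (Req_dec (S 0) c) as [Heq|Hne]; [exists 0; split; [lra|auto]|].
      destruct (classic (exists t1, 0 <= t1 /\ S t1 <= c)) as [[t1 [Ht1 HSt1]] | Hno].
      - destruct (Req_dec (S t1) c) as [He|Hne1]; [exists t1; auto|].
        assert (Ht1p : 0 < t1) by (destruct (Req_dec t1 0) as [->|]; lra).
        destruct (RC_eps S HSc (S 0 - c) ltac:(lra)) as [d [Hd Hd']].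
        set (e := Rmin (d / 2) (t1 / 2)).
        assert (He1 : e <= d / 2) by apply Rmin_l. assert (He2 : e <= t1 / 2) by apply Rmin_r.
        assert (He0 : 0 < e) by (unfold e; apply Rmin_glb_lt; lra).
        specialize (Hd' e ltac:(lra)). apply Rabs_def2 in Hd'.
        destruct (Ranalysis5.IVT_interv (fun u => c - S u) e t1) as [z [Hz Hz0]].
        + intros a Ha. apply continuity_pt_filterlim.
          apply (ex_derive_continuous (fun u => c - S u)). auto_derive. apply eS; lra.
        + lra.
        + simpl; lra.
        + simpl; lra.
        + exists z. simpl in Hz0. split; lra.
      - exfalso.
        assert (Hgt : forall t, 0 <= t -> c < S t).
        { intros t Ht. apply Rnot_le_lt. intro. apply Hno. exists t; auto. }
        assert (HIge : forall t, 0 <= t -> I 0 <= I t).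
        { intros t Ht. destruct (Hpos t Ht) as [HSt HIt]. specialize (HVall t Ht). unfold V0 in HVall.
          specialize (Hgt t Ht). specialize (Hdec t Ht).
          assert (Hl := ln_le_sub1 (S 0 / S t) ltac:(apply Rdiv_lt_0_compat; lra)).
          rewrite ln_div in Hl by lra.
          assert (c * (ln (S 0) - ln (S t)) <= c * (S 0 / S t - 1)) by (apply Rmult_le_compat_l; lra).
          assert (c * (S 0 / S t - 1) <= S 0 - S t).
          { apply (Rmult_le_reg_r (S t)); auto.
            replace (c * (S 0 / S t - 1) * S t) with (c * (S 0 - S t)) by (field; lra). nra. }
          lra. }
        set (T := S 0 / (gamma * I 0) + 1).
        assert (HT : 0 < T) by (unfold T; assert (0 < S 0 / (gamma * I 0)) by (apply Rdiv_lt_0_compat; nra); lra).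
        assert (RCg : RC (fun u => - S u - gamma * I 0 * u)).
        { apply (RC_plus (fun u => - S u) (fun u => - (gamma * I 0 * u))). apply RC_opp; auto.
          apply RC_cont. apply (ex_derive_continuous (fun u => - (gamma * I 0 * u))). auto_derive; auto. }
        assert (h := incr0 _ (fun u => gamma * R0 * S u * I u / N - gamma * I 0) (T + 1) RCg).
        assert (hT : - S 0 - gamma * I 0 * 0 <= - S T - gamma * I 0 * T).
        { apply h; [|lra]. intros u Hu. destruct (Hpos u ltac:(lra)) as [HSu HIu]. split.
          - assert (Hl : is_derive (fun u => gamma * I 0 * u) u (gamma * I 0)) by (auto_derive; auto; ring).
            assert (Hm := is_derive_minus _ _ u _ _ (is_derive_opp S u _ (dS u ltac:(lra))) Hl).
            match type of Hm with is_derive _ _ ?l => replace (gamma * R0 * S u * I u / N - gamma * I 0) with l end.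
            exact Hm. unfold minus, plus, opp; simpl. ring.
          - specialize (Hgt u ltac:(lra)). specialize (HIge u ltac:(lra)).
            assert (Hr : 1 <= R0 * S u / N).
            { apply (Rmult_le_reg_r N); auto. replace (R0 * S u / N * N) with (R0 * S u) by (field; lra).
              unfold c in Hgt. apply (Rmult_lt_compat_l R0) in Hgt; auto.
              replace (R0 * (N / R0)) with N in Hgt by (field; lra). lra. }
            replace (gamma * R0 * S u * I u / N) with (gamma * I u * (R0 * S u / N)) by (field; lra).
            assert (gamma * I u <= gamma * I u * (R0 * S u / N)) by (pose proof (Rmult_le_compat_l (gamma * I u) _ _ ltac:(nra) Hr); lra).
            nra. }
        specialize (Hgt T ltac:(lra)).
        assert (gamma * I 0 * T > S 0).
        { unfold T. replace (gamma * I 0 * (S 0 / (gamma * I 0) + 1)) with (S 0 + gamma * I 0) by (field; nra). nra. }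
        lra. }
    destruct Hex as [t [Ht HSt]]. exists t. split; auto.
    specialize (HVall t Ht). unfold V0 in HVall. rewrite HSt in HVall. lra.
Qed.

Theorem proposition2 (N gamma R0 M : R) (S I Rc : R -> R) :
  0 < N -> 0 < gamma -> 0 < R0 ->
  SIR_solution N gamma R0 S I Rc ->
  0 < S 0 -> 0 < I 0 -> 0 <= Rc 0 -> S 0 + I 0 + Rc 0 = N ->
  I 0 < M -> M < S 0 + I 0 ->
  N / S 0 <= R0 ->
  (Rbar_le (Imax I) (Finite M) <->
   R0 <= N * LambertWm1 ((M - N + Rc 0) / (S 0 * exp 1)) / (M - N + Rc 0)).
Proof.
  intros HN Hg HR Hsol HS0 HI0 HRc0 Hsum HM1 HM2 Hthr.
  assert (Hc : N / R0 <= S 0).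
  { apply (Rmult_le_reg_r R0); auto. replace (N / R0 * R0) with N by (field; lra).
    apply (Rmult_le_compat_r (S 0)) in Hthr; [|lra].
    replace (N / S 0 * S 0) with N in Hthr by (field; lra). lra. }
  destruct (ode N gamma R0 S I Rc HN Hg HR Hsol HS0 HI0 Hc) as [Hub [t [Ht HIt]]].
  rewrite <- (alg N R0 (S 0) (I 0) M (Rc 0)) by auto.
  unfold Imax. destruct (Lub_Rbar_correct (fun x => exists t, 0 <= t /\ x = I t)) as [Hu Hl].
  split.
  - intro H. assert (H1 : Rbar_le (Finite (I t)) (Finite M)).
    { eapply Rbar_le_trans; [|exact H]. apply Hu. exists t; auto. }
    simpl in H1. lra.
  - intro H. apply Hl. intros x [s [Hs ->]]. simpl. specialize (Hub s Hs). lra.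
Qed.
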